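(* In an efficient enhanced Gelfand--Zetlin pattern, the set of edges is uniquely determined by the underlying Gelfand--Zetlin pattern and the set of encircled entries. That is, two efficient enhanced patterns with the same entries and the same encircled entries have the same edges.
   Context: Let $\lambda=(\lambda_1\ge\dots\ge\lambda_n)$ be a partition. A GZ pattern with top row $\lambda$ is an integer array $a_{ij}$, $0\le i\le n-1$, $1\le j\le n-i$, with $a_{0j}=\lambda_{n+1-j}$ and $a_{i-1,j}\le a_{ij}\le a_{i-1,j+1}$ ($a_{ij}$ sits below $a_{i-1,j}$ and $a_{i-1,j+1}$). An enhanced GZ pattern is such an array with a set of encircled entries and a set of edges, each joining an $a_{ij}$ ($i\ge1$) with $a_{i-1,j}$ or $a_{i-1,j+1}$, such that: (1) row $0$ entries are encircled; (2) entries joined by an edge are equal and the lower one is encircled; (3) for $i\ge1$, $1\le j\le n-i-1$: both $a_{ij},a_{i,j+1}$ are joined to $a_{i-1,j+1}$ iff both are joined to $a_{i+1,j}$; (4) if $a_{0j}=a_{0,j+1}$ then $a_{1j}$ is encircled and joined to both; (5) if $a_{i-1,j}<a_{i-1,j+1}$ and $a_{ij}=a_{i-1,j}$, then $a_{ij}$ is encircled and joined to $a_{i-1,j}$; (6) if $a_{i-1,j}<a_{i-1,j+1}$, $a_{ij}=a_{i-1,j+1}$ and $a_{ij}$ is encircled, then it is joined to $a_{i-1,j+1}$; (7) if $a_{i-1,j}=a_{i-1,j+1}=a_{ij}$ and $a_{i-1,j},a_{i-1,j+1}$ can be connected by a path of edges, then $a_{ij}$ is encircled and joined to both; (8) if $a_{i-1,j}=a_{i-1,j+1}=a_{ij}$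 and $a_{ij}$ is encircled, then it is joined to at least one of them. The pattern is inefficient if it contains $a_{i-1,j}=a_{i-1,j+1}=a_{ij}$ with no edge between $a_{ij}$ and $a_{i-1,j+1}$, and efficient otherwise. *)

(* Defs.v *)
From mathcomp Require Import all_boot all_order all_algebra.
From Stdlib Require Import Relations.
Set Implicit Arguments. Unset Strict Implicit. Unset Printing Implicit Defensive.
Import Order.TTheory GRing.Theory Num.Theory.
Local Open Scope ring_scope.

(* A GZ pattern of size n is encoded by a : nat -> nat -> int, where a i j is
   the entry a_{ij} for 0 <= i <= n-1, 1 <= j <= n-i (values elsewhere are
   irrelevant).  Encircled entries: predicate c; edges: eL i j means an edge
   joining a_{ij} with a_{i-1,j}, eR i j an edge joining a_{ij} with a_{i-1,j+1}
   (both only for i >= 1). *)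

Definition valid (n i j : nat) : Prop := (i < n)%N /\ (1 <= j)%N /\ (j <= n - i)%N.

Definition is_partition (n : nat) (lam : seq nat) : Prop :=
  size lam = n /\ sorted geq lam.

Definition GZ_pattern (n : nat) (lam : seq nat) (a : nat -> nat -> int) : Prop :=
  (forall j, (1 <= j <= n)%N -> a 0%N j = (nth 0%N lam (n - j))%:Z) /\
  (forall i j, (1 <= i)%N -> valid n i j ->
     a i.-1 j <= a i j /\ a i j <= a i.-1 j.+1).

Definition edge_adj (eL eR : nat -> nat -> bool) (p q : nat * nat) : Prop :=
  exists i j,
    (eL i j /\ ((p = (i, j) /\ q = (i.-1, j)) \/ (p = (i.-1, j) /\ q = (i, j)))) \/
    (eR i j /\ ((p = (i, j) /\ q = (i.-1, j.+1)) \/ (p = (i.-1, j.+1) /\ q = (i, j)))).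

Definition connected_by_edges (eL eR : nat -> nat -> bool) (p q : nat * nat) : Prop :=
  clos_refl_trans (nat * nat) (edge_adj eL eR) p q.

Definition enhanced_GZ (n : nat) (lam : seq nat) (a : nat -> nat -> int)
    (c eL eR : nat -> nat -> bool) : Prop :=
  GZ_pattern n lam a /\
  (forall i j, c i j -> valid n i j) /\
  (forall i j, eL i j -> (1 <= i)%N /\ valid n i j) /\
  (forall i j, eR i j -> (1 <= i)%N /\ valid n i j) /\
  (* (1) *)
  (forall j, valid n 0 j -> c 0%N j) /\
  (* (2) *)
  (forall i j, eL i j -> a i j = a i.-1 j /\ c i j) /\
  (forall i j, eR i j -> a i j = a i.-1 j.+1 /\ c i j) /\
  (* (3) *)
  (forall i j, (1 <= i)%N -> (1 <= j)%N -> (j <= n - i - 1)%N ->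
     (eR i j && eL i j.+1 <-> eL i.+1 j && eR i.+1 j)) /\
  (* (4) *)
  (forall j, (1 <= j)%N -> (j <= n - 1)%N -> a 0%N j = a 0%N j.+1 ->
     [/\ c 1%N j, eL 1%N j & eR 1%N j]) /\
  (* (5) *)
  (forall i j, (1 <= i)%N -> valid n i j -> a i.-1 j < a i.-1 j.+1 ->
     a i j = a i.-1 j -> c i j /\ eL i j) /\
  (* (6) *)
  (forall i j, (1 <= i)%N -> valid n i j -> a i.-1 j < a i.-1 j.+1 ->
     a i j = a i.-1 j.+1 -> c i j -> eR i j) /\
  (* (7) *)
  (forall i j, (1 <= i)%N -> valid n i j ->
     a i.-1 j = a i.-1 j.+1 -> a i j = a i.-1 j ->
     connected_by_edges eL eR (i.-1, j) (i.-1, j.+1) ->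
     [/\ c i j, eL i j & eR i j]) /\
  (* (8) *)
  (forall i j, (1 <= i)%N -> valid n i j ->
     a i.-1 j = a i.-1 j.+1 -> a i j = a i.-1 j ->
     c i j -> eL i j || eR i j).

Definition efficient (n : nat) (a : nat -> nat -> int) (eR : nat -> nat -> bool) : Prop :=
  ~ (exists i j, [/\ (1 <= i)%N, valid n i j, a i.-1 j = a i.-1 j.+1,
                     a i j = a i.-1 j & ~~ eR i j]).

(* Main.v *)
Require Import Defs.
From mathcomp Require Import all_boot all_order all_algebra zify.
Import Order.TTheory GRing.Theory Num.Theory.
Local Open Scope ring_scope.

Theorem lemma4p2 (n : nat) (lam : seq nat) (a : nat -> nat -> int)
    (c eL eR eL' eR' : nat -> nat -> bool) :
  is_partition n lam ->
  enhanced_GZ n lam a c eL eR -> efficient n a eR ->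
  enhanced_GZ n lam a c eL' eR' -> efficient n a eR' ->
  (forall i j, eL i j = eL' i j) /\ (forall i j, eR i j = eR' i j).
Proof.
move=> _ [[Ha0 Hgz] [Hc [HeL [HeR [H1 [H2L [H2R [H3 [H4 [H5 [H6 [H7 H8]]]]]]]]]]]] Heff
  [_ [_ [HeL' [HeR' [_ [H2L' [H2R' [H3' [H4' [H5' [H6' [H7' H8']]]]]]]]]]]] Heff'.
suff K : forall i j, eL i j = eL' i j /\ eR i j = eR' i j.
  by split=> i j; case: (K i j).
elim=> [|i IH] j.
  case E1: (eL 0%N j); first by case: (HeL _ _ E1).
  case E2: (eL' 0%N j); first by case: (HeL' _ _ E2).
  case E3: (eR 0%N j); first by case: (HeR _ _ E3).
  case E4: (eR' 0%N j); first by case: (HeR' _ _ E4).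
  by [].
have [V|NV] := boolP [&& (i.+1 < n)%N, (1 <= j)%N & (j <= n - i.+1)%N]; last first.
  have NV' : ~ valid n i.+1 j by move=> [x [y z]]; move/negP: NV; apply; rewrite x y z.
  case E1: (eL i.+1 j); first by case: (HeL _ _ E1).
  case E2: (eL' i.+1 j); first by case: (HeL' _ _ E2).
  case E3: (eR i.+1 j); first by case: (HeR _ _ E3).
  case E4: (eR' i.+1 j); first by case: (HeR' _ _ E4).
  by [].
have Vv : valid n i.+1 j by case/and3P: V.
have [le1 le2] := Hgz i.+1 j isT Vv; rewrite /= in le1 le2.
have : a i j <= a i j.+1 by apply: le_trans le2.
rewrite le_eqVlt => /orP[/eqP Eq|Lt].
  have Ea : a i.+1 j = a i j by apply/le_anti; rewrite le1 andbT Eq.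
  have R1 : eR i.+1 j.
    apply/negPn/negP => nR; apply: Heff; exists i.+1, j; split => //.
  have R2 : eR' i.+1 j.
    apply/negPn/negP => nR; apply: Heff'; exists i.+1, j; split => //.
  rewrite R1 R2; split => //.
  case: i IH Vv V le1 le2 Eq Ea R1 R2 => [|k] IH Vv V le1 le2 Eq Ea R1 R2.
    case/and3P: V => V1 V2 V3.
    have V3' : (j <= n - 1)%N by lia.
    by case: (H4 j V2 V3' Eq); case: (H4' j V2 V3' Eq) => _ -> _ _ -> _.
  case/and3P: V => V1 V2 V3.
  have V3' : (j <= n - k.+1 - 1)%N by lia.
  have h := H3 k.+1 j isT V2 V3'; have h' := H3' k.+1 j isT V2 V3'.
  have [e1 e2] := IH j; have [e3 e4] := IH j.+1.
  apply/idP/idP => H.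
    have : eL' k.+2 j && eR' k.+2 j by apply/h'; rewrite -e2 -e3; apply/h; rewrite H R1.
    by case/andP.
  have : eL k.+2 j && eR k.+2 j by apply/h; rewrite e2 e3; apply/h'; rewrite H R2.
  by case/andP.
have [E|NE] := eqVneq (a i.+1 j) (a i j).
  have [c1 l1] := H5 i.+1 j isT Vv Lt E.
  have [_ l2] := H5' i.+1 j isT Vv Lt E.
  rewrite l1 l2; split => //.
  have ne : a i.+1 j != a i j.+1 by rewrite E lt_eqF.
  case E3: (eR i.+1 j); first by case: (H2R _ _ E3) => /eqP; rewrite (negbTE ne).
  case E4: (eR' i.+1 j); first by case: (H2R' _ _ E4) => /eqP; rewrite (negbTE ne).
  by [].
have F1 : eL i.+1 j = false by apply/negP => /H2L [/eqP]; rewrite (negbTE NE).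
have F2 : eL' i.+1 j = false by apply/negP => /H2L' [/eqP]; rewrite (negbTE NE).
rewrite F1 F2; split => //.
have [E|NE2] := eqVneq (a i.+1 j) (a i j.+1).
  case Cc: (c i.+1 j).
    by rewrite (H6 i.+1 j isT Vv Lt E Cc) (H6' i.+1 j isT Vv Lt E Cc).
  case E3: (eR i.+1 j); first by case: (H2R _ _ E3); rewrite Cc.
  case E4: (eR' i.+1 j); first by case: (H2R' _ _ E4); rewrite Cc.
  by [].
case E3: (eR i.+1 j); first by case: (H2R _ _ E3) => /eqP; rewrite (negbTE NE2).
case E4: (eR' i.+1 j); first by case: (H2R' _ _ E4) => /eqP; rewrite (negbTE NE2).
by [].
Qed.
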